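(* Let $N$, $i$, $k$ be positive integers with $k\le N$ and $N/(i+1)\le k\le N/i$, and suppose $N$ is a multiple of every integer in $[2,i]$. Then $$I_N\!\left(\frac{1}{k}\right)=2+N\sum_{j=1}^{i}\frac{\varphi(j)}{j}-k\,\Phi(i),$$ where $\Phi(i)=\sum_{j=1}^{i}\varphi(j)$.
   Context: $\varphi$ is Euler's totient function and $\Phi(i)=\sum_{j=1}^{i}\varphi(j)$ is the totient summatory function (equivalently $|F_i|-1$). For a positive integer $N$, the Farey sequence of order $N$, $F_N$, is the increasing list of all reduced fractions $h/k$ with $0\le h\le k\le N$ and $\gcd(h,k)=1$; it begins with $0/1$ and ends with $1/1$. For $x\in F_N$, $I_N(x)$ denotes the position of $x$ in $F_N$, indexed starting from $1$ (so $I_N(0/1)=1$). *)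

(* Defs.v *)
From HB Require Import structures.
From mathcomp Require Import all_boot all_order all_algebra.
Set Implicit Arguments. Unset Strict Implicit. Unset Printing Implicit Defensive.
Import Order.TTheory GRing.Theory Num.Theory.
Local Open Scope ring_scope.

Definition farey (N : nat) : seq rat :=
  sort <=%R [seq (p.1%:R / p.2%:R : rat) |
               p <- [seq (h, k) | k <- iota 1 N, h <- iota 0 k.+1]
               & coprime p.1 p.2].

(* 1-based position of x in the Farey sequence F_N. *)
Definition farey_index (N : nat) (x : rat) : nat := (index x (farey N)).+1.

Definition Phi (i : nat) : nat := (\sum_(1 <= j < i.+1) totient j)%N.

(* Main.v *)
Require Import Defs.
From HB Require Import structures.
From mathcomp Require Import all_boot all_order all_algebra.
From mathcomp Require Import zify ring lra.
Import Order.TTheory GRing.Theory Num.Theory.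

Lemma D_mul h q : 0 < h -> \sum_(0 <= m < q * h) coprime h m = q * totient h.
Proof.
move=> h0; elim: q => [|q IH]; first by rewrite mul0n big_geq.
rewrite mulSnr (@big_cat_nat _ _ _ (q * h)) //= ?leq_addr // IH mulSnr.
congr (_ + _); rewrite -{1}[q * h]add0n big_addn addKn totient_count_coprime.
by apply: eq_bigr => m _; rewrite /coprime addnC gcdnMDl.
Qed.

Lemma C_shift h x : h %| x -> \sum_(1 <= m < x.+1) coprime h m = \sum_(0 <= m < x) coprime h m.
Proof.
move=> hx.
have E : \sum_(0 <= m < x.+1) (coprime h m : nat) = \sum_(0 <= m < x.+1) (coprime h m : nat) by [].
move: E; rewrite {1}big_nat_recl // big_nat_recr //= => E.
rewrite big_add1 /=.
have : (coprime h 0 : nat) = coprime h x by rewrite /coprime gcdn0 (gcdn_idPl hx).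
move=> e; apply/eqP; rewrite -(eqn_add2l (coprime h 0)) E e addnC //.
Qed.

Lemma g_eq N k j : 0 < j -> j %| N -> j * k <= N ->
  \sum_(1 <= m < N.+1) (coprime j m && (j * k < m)) + k * totient j
  = N %/ j * totient j.
Proof.
move=> j0 jN jkN.
have split1 F : \sum_(1 <= m < N.+1) (F m : nat) =
   \sum_(1 <= m < (j*k).+1) F m + \sum_((j*k).+1 <= m < N.+1) F m.
  by rewrite (@big_cat_nat _ _ _ (j*k).+1).
rewrite -(@D_mul j (N %/ j) j0) divnK // -C_shift //.
rewrite !split1.
rewrite big_nat_cond big1 ?add0n; last first.
  by move=> m /andP[/andP[_ Hm] _]; rewrite ltnNge -ltnS Hm andbF.
rewrite addnC; congr (_ + _).
  by rewrite C_shift ?dvdn_mulr // (mulnC j) D_mul.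
by apply: eq_big_nat => m /andP[Hm _]; rewrite Hm andbT.
Qed.

Lemma big_cat_nat_helper (a b : nat) : b = 0 -> a + b = a. Proof. by move->; rewrite addn0. Qed.
Lemma core N i k : 0 < N -> 0 < i -> 0 < k -> k * i <= N -> N <= k * i.+1 ->
  (forall d, 2 <= d <= i -> d %| N) ->
  \sum_(1 <= m < N.+1) \sum_(0 <= h < m.+1) (coprime h m && (h * k < m))
   + \sum_(1 <= j < i.+1) k * totient j
  = 1 + \sum_(1 <= j < i.+1) N %/ j * totient j.
Proof.
move=> N0 i0 k0 kiN NkI hdiv.
have iN : i <= N by apply: leq_trans kiN; rewrite leq_pmull.
rewrite (eq_bigr (fun m => (coprime 0 m && (0 * k < m)) +
    \sum_(0 <= h < m) (coprime h.+1 m && (h.+1 * k < m)))); last first.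
  by move=> m _; rewrite big_nat_recl.
rewrite big_split /=.
have -> : \sum_(1 <= m < N.+1) (coprime 0 m && (0 * k < m)) = 1.
  rewrite big_ltn // big_nat_cond big1 ?addn0 //.
  by move=> m /andP[/andP[Hm _] _]; rewrite /coprime gcd0n; case: m Hm => // -[] // m _ ; rewrite andbF.
rewrite -addnA; congr (_ + _).
rewrite (eq_big_nat _ _ (F2 := fun m => \sum_(0 <= h < N) (coprime h.+1 m && (h.+1 * k < m)))); last first.
  move=> m /andP[_ Hm]; rewrite [RHS](@big_cat_nat _ _ _ m) //= -[LHS]addn0; congr (_ + _); symmetry; apply: big1_seq.
  move=> h /andP[_]; rewrite mem_index_iota => /andP[Hh _]; apply/eqP; rewrite eqb0 negb_and; apply/orP; right.
  rewrite -leqNgt; nia.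
rewrite (@exchange_big_nat _ _ _ 1 N.+1 0 N xpredT xpredT (fun m h => (coprime h.+1 m && (h.+1 * k < m)) : nat)) /= (@big_cat_nat _ _ _ i) //= [X in X + _ = _]big_cat_nat_helper; last first.
  apply: big1_seq => h /andP[_]; rewrite mem_index_iota => /andP[Hh _]; apply: big1_seq => m /andP[_]; rewrite mem_index_iota => /andP[_ Hm].
  apply/eqP; rewrite eqb0 negb_and; apply/orP; right; rewrite -leqNgt.
  apply: leq_trans (leq_trans NkI _); first by rewrite -ltnS.
  by rewrite mulnC leq_pmul2r.
rewrite -[X in X + _ = _](big_add1 _ _ 0 i.+1 xpredT (fun j => \sum_(1 <= m < N.+1) (coprime j m && (j * k < m)))) /=.
rewrite -big_split /=; apply: eq_big_nat => j /andP[j1 ji].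
apply: g_eq => //.
  by case: j j1 ji => // -[|j] _ ji; [apply: dvd1n | apply: hdiv].
by apply: leq_trans kiN; rewrite mulnC leq_pmul2l.
Qed.

Local Open Scope ring_scope.

Lemma index_sorted (s : seq rat) (x : rat) : sorted <=%R s -> x \in s ->
  index x s = count (fun y => y < x) s.
Proof.
elim: s => [//|y s IH] /= Hs; rewrite in_cons.
have Hall := order_path_min le_trans Hs.
case: (eqVneq x y) => [->|nxy] /=.
  move=> _; symmetry; apply/eqP; rewrite -leqn0 leqNgt ltxx add0n -has_count.
  apply/hasPn => z zs /=; rewrite -leNgt; exact: (allP Hall).
move=> xs; rewrite IH ?(path_sorted Hs) //.
have yx : y <= x by exact: (allP Hall).
by rewrite lt_neqAle eq_sym nxy yx.
Qed.

Lemma frac_lt (h m k : nat) : (0 < m)%N -> (0 < k)%N ->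
  ((h%:R / m%:R : rat) < 1 / k%:R) = (h * k < m)%N.
Proof.
move=> m0 k0.
by rewrite ltr_pdivrMr ?ltr0n // mul1r mulrC ltr_pdivlMr ?ltr0n // -natrM ltr_nat.
Qed.

Lemma count_farey N k : (0 < k)%N ->
  count (fun y => y < 1 / k%:R) (farey N) =
  (\sum_(1 <= m < N.+1) \sum_(0 <= h < m.+1) (coprime h m && (h * k < m)))%N.
Proof.
move=> k0.
rewrite /farey (permP (introT permPl (perm_sort _ _))) count_map count_filter -sum1_count big_mkcond.
rewrite big_allpairs_dep /=.
rewrite /index_iota subSS subn0. apply: eq_big_seq; move=> m; rewrite mem_iota => /andP[m0 _].
rewrite subn0 /=; apply: eq_bigr => h _; rewrite frac_lt // andbC.
by case: (_ && _).
Qed.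


Theorem theorem3 (N i k : nat) :
  (0 < N)%N -> (0 < i)%N -> (0 < k)%N -> (k <= N)%N ->
  (N%:R / (i.+1)%:R : rat) <= k%:R -> (k%:R : rat) <= N%:R / i%:R ->
  (forall d : nat, (2 <= d <= i)%N -> (d %| N)%N) ->
  (farey_index N (1 / k%:R))%:R =
    2 + N%:R * (\sum_(1 <= j < i.+1) ((totient j)%:R / j%:R : rat))
      - k%:R * (Phi i)%:R.
Proof.
move=> N0 i0 k0 kN H1 H2 hdiv.
have NkI : (N <= k * i.+1)%N.
  by move: H1; rewrite ler_pdivrMr ?ltr0n // -natrM ler_nat.
have kiN : (k * i <= N)%N.
  by move: H2; rewrite ler_pdivlMr ?ltr0n // -natrM ler_nat.
have xin : 1 / k%:R \in farey N.
  rewrite /farey mem_sort; apply/mapP; exists (1%N, k); last by [].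
  rewrite mem_filter coprime1n /=.
  apply/flatten_mapP; exists k; first by rewrite mem_iota; lia.
  rewrite in_cons /=; apply: map_f; rewrite mem_iota; lia.
have E := @core N i k N0 i0 k0 kiN NkI hdiv.
rewrite /farey_index index_sorted ?sort_sorted //; last exact: le_total.
rewrite count_farey //.
have E' := congr1 (fun n : nat => n%:R : rat) E; rewrite /= !natrD in E'.
have -> : N%:R * (\sum_(1 <= j < i.+1) ((totient j)%:R / j%:R : rat)) =
    (\sum_(1 <= j < i.+1) (N %/ j * totient j)%N)%:R.
  rewrite natr_sum mulr_sumr; apply: eq_big_nat => j /andP[j1 ji].
  have jN : (j %| N)%N.
    by case: j j1 ji => // -[|j] _ ji; [apply: dvd1n | apply: hdiv].
  rewrite -{1}(divnK jN) !natrM; field.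
  by rewrite pnatr_eq0 -lt0n.
have -> : k%:R * (Phi i)%:R = (\sum_(1 <= j < i.+1) k * totient j)%N%:R :> rat.
  by rewrite -natrM /Phi big_distrr.
rewrite -addn1 natrD; lra.
Qed.
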